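(* For $n=0,1,2,\dots$ let $\alpha_n=1/(n+1)!$, let $\beta_0=0$, $\beta_{n+1}=\sum_{k=0}^{n}\frac{1}{k!(k+2)!}$, and $\beta=\lim_{n\to\infty}\beta_n$. Define $f:\mathbb{R}\to\mathbb{R}$ by $f(x)=x$ if $x>1$; $f(x)=\alpha_{n+1}x+\beta_{n+1}$ if $\alpha_{n+1}<x\le\alpha_n$ ($n=0,1,2,\dots$); $f(0)=\beta$; and $f(x)=f(-x)$ if $x<0$. Then $f$ is continuous and convex with global minimizer $\bar x=0$, and $$T_{\operatorname{gph}\partial_p f}(0,0)=\{(w,z)\mid 0\le z\le w\}\cup\{(w,z)\mid 0\ge z\ge w\}.$$ Consequently, for each $w\in\operatorname{dom}D(\partial_p f)(0|0)$ with $|w|=1$ there is $z\in D(\partial_p f)(0|0)(w)$ with $zw\ge1$ (the sufficient condition of the second kind holds with $\kappa=1$), yet there exist $w\neq0$ and $z\in D(\partial f)(0|0)(w)$ with $zw=0$, and $0$ is not a strong local minimizer of $f$ (the quadratic growth condition fails at $0$).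
   Context: The proximal subdifferential is $\partial_p f(\bar x)=\{v\mid \liminf_{x\to\bar x}\frac{f(x)-f(\bar x)-\langle v,x-\bar x\rangle}{\|x-\bar x\|^2}>-\infty\}$; for convex $f$ it coincides with the convex and limiting subdifferential $\partial f$. The tangent cone is $T_\Omega(\bar u)=\{v\mid \exists t_k\downarrow0,\ v_k\to v,\ \bar u+t_kv_k\in\Omega\}$, and $DF(\bar x|\bar y)(w)=\{z\mid (w,z)\in T_{\operatorname{gph}F}(\bar x,\bar y)\}$. $\bar x$ is a strong local minimizer if there are $\kappa,\gamma>0$ with $f(x)-f(\bar x)\ge\frac\kappa2|x-\bar x|^2$ for $|x-\bar x|\le\gamma$. *)

(* Defs.v *)
From Stdlib Require Import Reals Lra Lia Arith Factorial Classical ClassicalEpsilon.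
Open Scope R_scope.

Definition alpha (n : nat) : R := / INR (fact (S n)).

Definition beta (n : nat) : R :=
  match n with
  | O => 0
  | S m => sum_f_R0 (fun k => / (INR (fact k) * INR (fact (k + 2)))) m
  end.

Definition piece_index (x : R) : nat :=
  epsilon (inhabits O) (fun n => alpha (S n) < x <= alpha n).

(* f on [0, +oo), with the value b = lim beta_n at 0. *)
Definition f_nonneg (b : R) (x : R) : R :=
  if Rlt_dec 1 x then x
  else if Req_EM_T x 0 then b
  else alpha (S (piece_index x)) * x + beta (S (piece_index x)).

Definition fex (b : R) (x : R) : R := f_nonneg b (Rabs x).

Definition convex_fun (f : R -> R) : Prop :=
  forall x y t, 0 <= t <= 1 ->
    f (t * x + (1 - t) * y) <= t * f x + (1 - t) * f y.

(* Proximal subdifferential: liminf_{x -> xb} (f x - f xb - v (x - xb)) / |x - xb|^2 > -oo,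
   i.e. the quotient is bounded below on a punctured neighbourhood of xb. *)
Definition prox_subdiff (f : R -> R) (xb v : R) : Prop :=
  exists M delta, 0 < delta /\
    forall x, 0 < Rabs (x - xb) < delta ->
      (f x - f xb - v * (x - xb)) / (Rabs (x - xb)) ^ 2 >= M.

Definition conv_subdiff (f : R -> R) (xb v : R) : Prop :=
  forall x, f xb + v * (x - xb) <= f x.

Definition tangent_cone (Omega : R * R -> Prop) (u v : R * R) : Prop :=
  exists (t : nat -> R) (vk : nat -> R * R),
    (forall k, 0 < t k) /\ Un_cv t 0 /\
    Un_cv (fun k => fst (vk k)) (fst v) /\ Un_cv (fun k => snd (vk k)) (snd v) /\
    (forall k, Omega (fst u + t k * fst (vk k), snd u + t k * snd (vk k))).

Definition gph (F : R -> R -> Prop) (p : R * R) : Prop := F (fst p) (snd p).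

Definition graph_deriv (F : R -> R -> Prop) (xb yb w z : R) : Prop :=
  tangent_cone (gph F) (xb, yb) (w, z).

Definition strong_local_min (f : R -> R) (xb : R) : Prop :=
  exists kappa gamma, 0 < kappa /\ 0 < gamma /\
    forall x, Rabs (x - xb) <= gamma -> f x - f xb >= kappa / 2 * (Rabs (x - xb)) ^ 2.

(* Main.v *)
Require Import Defs.
From Stdlib Require Import Reals Lra Lia Arith Factorial Classical ClassicalEpsilon.
Open Scope R_scope.


Definition L (n : nat) (x : R) : R := alpha (S n) * x + beta (S n).

Lemma alpha_pos n : 0 < alpha n.
Proof. unfold alpha. apply Rinv_0_lt_compat, INR_fact_lt_0. Qed.

Lemma alpha_S n : alpha (S n) = alpha n / (INR n + 2).
Proof.
  unfold alpha. rewrite (fact_simpl (S n)), mult_INR.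
  replace (INR (S (S n))) with (INR n + 2) by (rewrite !S_INR; ring).
  assert (H := INR_fact_lt_0 (S n)). assert (0 <= INR n) by apply pos_INR.
  field. lra.
Qed.

Lemma alpha_0 : alpha 0 = 1.
Proof. unfold alpha. simpl. lra. Qed.

Lemma alpha_lt n : alpha (S n) < alpha n.
Proof.
  rewrite alpha_S. assert (H := alpha_pos n). assert (0 <= INR n) by apply pos_INR.
  apply Rmult_lt_reg_r with (INR n + 2). lra.
  unfold Rdiv. rewrite Rmult_assoc, Rinv_l by lra. nra.
Qed.

Lemma alpha_anti m n : (m <= n)%nat -> alpha n <= alpha m.
Proof.
  induction 1. lra. pose proof (alpha_lt m0). lra.
Qed.

Lemma alpha_santi m n : (m < n)%nat -> alpha n < alpha m.
Proof.
  intro H. pose proof (alpha_anti (S m) n H). pose proof (alpha_lt m). lra.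
Qed.

Lemma alpha_le1 n : alpha n <= 1.
Proof. rewrite <- alpha_0. apply alpha_anti. lia. Qed.

Lemma alpha_bound n : alpha n <= / (INR n + 1).
Proof.
  unfold alpha. assert (H : (S n <= fact (S n))%nat).
  { rewrite fact_simpl. pose proof (lt_O_fact n). nia. }
  apply le_INR in H. rewrite S_INR in H.
  assert (0 <= INR n) by apply pos_INR.
  apply Rinv_le_contravar; lra.
Qed.

Lemma beta_step n :
  beta (S (S n)) - beta (S n) = (alpha (S n) - alpha (S (S n))) * alpha (S n).
Proof.
  unfold beta. rewrite tech5. cbv beta.
  replace (S n + 2)%nat with (S (S (S n))) by lia.
  rewrite (alpha_S (S n)). unfold alpha.
  rewrite (fact_simpl (S (S n))), (fact_simpl (S n)), !mult_INR.
  rewrite !S_INR. assert (H := INR_fact_lt_0 (S n)). assert (0 <= INR n) by apply pos_INR.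
  field. lra.
Qed.

Lemma L_diff n x : L n x - L (S n) x = (alpha (S n) - alpha (S (S n))) * (x - alpha (S n)).
Proof. unfold L. pose proof (beta_step n). nra. Qed.

Lemma chain_up (g : nat -> R) p : (forall m, (m < p)%nat -> g m <= g (S m)) ->
  forall m, (m <= p)%nat -> g m <= g p.
Proof.
  induction p; intros H m Hm.
  - replace m with 0%nat by lia. lra.
  - destruct (Nat.eq_dec m (S p)). subst; lra.
    apply Rle_trans with (g p). apply IHp; auto. lia.
    apply H. lia.
Qed.

Lemma piece_lemma p x : alpha (S p) < x <= alpha p -> forall m, L m x <= L p x.
Proof.
  intros [H1 H2] m.
  destruct (le_lt_dec m p).
  - apply chain_up with (g := fun k => L k x); auto.
    intros k Hk. pose proof (L_diff k x). pose proof (alpha_lt (S k)).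
    pose proof (alpha_anti (S k) p Hk). nra.
  - replace m with (p + (m - p))%nat by lia. generalize (m - p)%nat. intro d.
    induction d. rewrite Nat.add_0_r; lra.
    rewrite Nat.add_succ_r. pose proof (L_diff (p + d) x). pose proof (alpha_lt (S (p+d))).
    pose proof (alpha_anti (S p) (S (p + d))). assert (alpha (S (p+d)) <= alpha (S p)) by (apply H3; lia).
    nra.
Qed.

Lemma L0 x : L 0 x = x / 2 + / 2.
Proof. unfold L, alpha, beta. simpl. lra. Qed.

Lemma L_at1 n : alpha (S n) + beta (S n) <= 1.
Proof.
  pose proof (piece_lemma 0 1) as H. rewrite alpha_0 in H.
  assert (alpha 1 < 1) by (rewrite <- alpha_0; apply alpha_lt).
  specialize (H ltac:(lra) n). rewrite L0 in H. unfold L in H. lra.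
Qed.

Lemma beta_grow : Un_growing beta.
Proof.
  intro n. destruct n.
  - unfold beta. simpl. lra.
  - pose proof (beta_step n). pose proof (alpha_lt (S n)). pose proof (alpha_pos (S n)). nra.
Qed.

Lemma beta_conv : exists b, Un_cv beta b.
Proof.
  destruct (growing_cv beta beta_grow) as [b Hb].
  - exists 1. intros x [i ->]. destruct i. unfold beta; lra.
    pose proof (L_at1 i). pose proof (alpha_pos (S i)). lra.
  - exists b; exact Hb.
Qed.

Lemma piece_exists x : 0 < x <= 1 -> exists n, alpha (S n) < x <= alpha n.
Proof.
  intros Hx.
  destruct (INR_unbounded (/ x)) as [N HN].
  assert (HaN : alpha (S N) < x).
  { pose proof (alpha_bound (S N)). rewrite S_INR in H.
    assert (/ (INR N + 1 + 1) < x).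
    { rewrite <- (Rinv_inv x). apply Rinv_lt_contravar.
      apply Rmult_lt_0_compat. apply Rinv_0_lt_compat; lra. pose proof (pos_INR N); lra.
      lra. } lra. }
  clear HN. induction N.
  - exists 0%nat. rewrite alpha_0. lra.
  - destruct (Rle_dec x (alpha (S N))). exists (S N); lra.
    apply IHN; lra.
Qed.

Lemma piece_spec x : 0 < x <= 1 -> alpha (S (piece_index x)) < x <= alpha (piece_index x).
Proof.
  intro H. unfold piece_index.
  apply (epsilon_spec (inhabits O) (fun n => alpha (S n) < x <= alpha n)).
  now apply piece_exists.
Qed.

Lemma piece_unique p m : alpha (S p) < alpha m <= alpha p -> p = m.
Proof.
  intros [H1 H2]. destruct (lt_eq_lt_dec p m) as [[H|H]|H]; auto.
  - pose proof (alpha_anti (S p) m H). lra.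
  - pose proof (alpha_santi m p H). lra.
Qed.

Lemma fnn_gt1 b x : 1 < x -> f_nonneg b x = x.
Proof. intro H. unfold f_nonneg. destruct (Rlt_dec 1 x); [auto|lra]. Qed.

Lemma fnn_0 b : f_nonneg b 0 = b.
Proof. unfold f_nonneg. destruct (Rlt_dec 1 0); [lra|]. destruct (Req_EM_T 0 0); [auto|lra]. Qed.

Lemma fnn_mid b x : 0 < x <= 1 -> f_nonneg b x = L (piece_index x) x.
Proof.
  intro H. unfold f_nonneg. destruct (Rlt_dec 1 x); [lra|]. destruct (Req_EM_T x 0); [lra|].
  reflexivity.
Qed.

Lemma cv_const c : Un_cv (fun _ => c) c.
Proof. intros e He. exists 0%nat. intros. unfold R_dist. rewrite Rminus_diag, Rabs_R0. lra. Qed.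

Section B.
Variable b : R.
Hypothesis Hcv : Un_cv beta b.

Lemma Hb' : forall n, beta n <= b.
Proof. apply growing_ineq. apply beta_grow. exact Hcv. Qed.

Lemma b_nonneg : 0 <= b.
Proof. pose proof (Hb' 0). unfold beta in H. lra. Qed.

Lemma G1 w n : 0 <= w -> L n w <= f_nonneg b w.
Proof.
  intro Hw. destruct (Rlt_dec 1 w).
  - rewrite fnn_gt1 by auto. pose proof (L_at1 n). pose proof (alpha_le1 (S n)).
    unfold L. nra.
  - destruct (Req_EM_T w 0).
    + subst. rewrite fnn_0. unfold L. rewrite Rmult_0_r, Rplus_0_l. apply Hb'.
    + rewrite fnn_mid by lra. apply piece_lemma. apply piece_spec. lra.
Qed.

Lemma G2 w : 0 <= w -> w <= f_nonneg b w.
Proof.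
  intro Hw. destruct (Rlt_dec 1 w).
  - rewrite fnn_gt1 by auto. lra.
  - destruct (Req_EM_T w 0).
    + subst. rewrite fnn_0. apply b_nonneg.
    + pose proof (G1 w 0 Hw). rewrite L0 in H. lra.
Qed.

Lemma b_le w : 0 <= w -> b <= f_nonneg b w.
Proof.
  intro Hw. apply (Rle_cv_lim (Un := beta) (Vn := fun _ => f_nonneg b w)); auto.
  2: apply cv_const.
  intro n. destruct n.
  - unfold beta. pose proof (G2 w Hw). lra.
  - pose proof (G1 w n Hw). unfold L in H. pose proof (alpha_pos (S n)). nra.
Qed.

Definition s_nn (x : R) : R :=
  if Rlt_dec 1 x then 1 else if Req_EM_T x 0 then 0 else alpha (S (piece_index x)).

Lemma s_nn_bounds x : 0 <= x -> 0 <= s_nn x <= x /\ s_nn x <= 1.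
Proof.
  intro Hx. unfold s_nn. destruct (Rlt_dec 1 x). lra.
  destruct (Req_EM_T x 0). lra.
  pose proof (piece_spec x ltac:(lra)). pose proof (alpha_pos (S (piece_index x))).
  pose proof (alpha_le1 (S (piece_index x))). lra.
Qed.

Lemma KN u w : 0 <= u -> 0 <= w -> f_nonneg b u + s_nn u * (w - u) <= f_nonneg b w.
Proof.
  intros Hu Hw. unfold s_nn. destruct (Rlt_dec 1 u).
  - rewrite fnn_gt1 by auto. pose proof (G2 w Hw). lra.
  - destruct (Req_EM_T u 0).
    + subst. rewrite fnn_0. pose proof (b_le w Hw). lra.
    + rewrite fnn_mid by lra. pose proof (G1 w (piece_index u) Hw). unfold L in *. lra.
Qed.

End B.

Section C.
Variable b : R.
Hypothesis Hcv : Un_cv beta b.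

Definition sl (x : R) : R := if Rle_dec 0 x then s_nn x else - s_nn (- x).

Lemma sl_pos x : 0 <= x -> 0 <= sl x <= x /\ sl x <= 1.
Proof. intro H. unfold sl. destruct (Rle_dec 0 x); [|lra]. apply s_nn_bounds; auto. Qed.

Lemma sl_neg x : x <= 0 -> x <= sl x <= 0 /\ -1 <= sl x.
Proof.
  intro H. unfold sl. destruct (Rle_dec 0 x).
  - assert (x = 0) by lra. subst. pose proof (s_nn_bounds 0 (Rle_refl 0)). lra.
  - pose proof (s_nn_bounds (-x) ltac:(lra)). lra.
Qed.

Lemma subgrad y z : fex b y + sl y * (z - y) <= fex b z.
Proof.
  unfold fex, sl. destruct (Rle_dec 0 y).
  - rewrite (Rabs_right y) by lra. pose proof (KN b Hcv y (Rabs z) r (Rabs_pos z)).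
    pose proof (s_nn_bounds y r). pose proof (Rle_abs z). nra.
  - rewrite (Rabs_left y) by lra. pose proof (KN b Hcv (-y) (Rabs z) ltac:(lra) (Rabs_pos z)).
    pose proof (s_nn_bounds (-y) ltac:(lra)). pose proof (Rle_abs (-z)). rewrite Rabs_Ropp in H1. nra.
Qed.

Lemma sl_abs x : Rabs (sl x) <= 1.
Proof.
  destruct (Rle_dec 0 x).
  - pose proof (sl_pos x r). rewrite Rabs_right; lra.
  - pose proof (sl_neg x ltac:(lra)). apply Rabs_le; lra.
Qed.

Lemma fex_lip x y : Rabs (fex b x - fex b y) <= Rabs (x - y).
Proof.
  pose proof (subgrad x y). pose proof (subgrad y x).
  pose proof (sl_abs x). pose proof (sl_abs y).
  assert (sl x * (y - x) >= - Rabs (x - y)).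
  { pose proof (Rabs_mult (sl x) (y - x)). rewrite Rabs_minus_sym in H3.
    pose proof (Rle_abs (-(sl x * (y - x)))). rewrite Rabs_Ropp in H4.
    pose proof (Rabs_pos (x - y)). nra. }
  assert (sl y * (x - y) >= - Rabs (x - y)).
  { pose proof (Rabs_mult (sl y) (x - y)).
    pose proof (Rle_abs (-(sl y * (x - y)))). rewrite Rabs_Ropp in H5.
    pose proof (Rabs_pos (x - y)). nra. }
  apply Rabs_le; lra.
Qed.

Lemma fex_cont : continuity (fex b).
Proof.
  intros x. unfold continuity_pt, continue_in, limit1_in, limit_in.
  intros e He. exists e. split; auto. intros y [_ Hy]. simpl in *. unfold R_dist in *.
  pose proof (fex_lip y x). lra.
Qed.

Lemma fex_convex : convex_fun (fex b).
Proof.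
  intros x y t Ht. set (z := t * x + (1 - t) * y).
  pose proof (subgrad z x). pose proof (subgrad z y).
  assert (t * (sl z * (x - z)) + (1 - t) * (sl z * (y - z)) = 0) by (unfold z; ring).
  nra.
Qed.

Lemma fex_0 : fex b 0 = b.
Proof. unfold fex. rewrite Rabs_R0. apply fnn_0. Qed.

Lemma fex_min x : fex b 0 <= fex b x.
Proof. pose proof (subgrad 0 x). unfold sl in H. destruct (Rle_dec 0 0); [|lra].
  pose proof (s_nn_bounds 0 r). assert (s_nn 0 = 0) by lra. rewrite H1 in H. lra. Qed.

End C.

Lemma lim_lemma c d K delta : 0 < delta ->
  (forall e, 0 < e < delta -> c <= d + K * e) -> c <= d.
Proof.
  intros Hd H. destruct (Rle_dec c d); auto.
  set (e := Rmin (delta / 2) ((c - d) / (2 * (Rabs K + 1)))).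
  assert (HK := Rabs_pos K).
  assert (He1 : 0 < e). { unfold e. apply Rmin_glb_lt. lra. apply Rdiv_lt_0_compat; lra. }
  assert (He2 : e <= (c - d) / (2 * (Rabs K + 1))) by apply Rmin_r.
  assert (He3 : e <= delta / 2) by apply Rmin_l.
  specialize (H e ltac:(lra)).
  assert (K * e <= Rabs K * e). { apply Rmult_le_compat_r. lra. apply Rle_abs. }
  assert ((Rabs K + 1) * e <= (c - d) / 2).
  { apply Rmult_le_reg_l with (/ (Rabs K + 1)). apply Rinv_0_lt_compat; lra.
    rewrite <- Rmult_assoc, Rinv_l by lra. unfold Rdiv in *.
    rewrite Rinv_mult in He2. lra. }
  nra.
Qed.

Lemma prox_ineq f x v : prox_subdiff f x v -> exists M delta, 0 < delta /\
  forall y, 0 < Rabs (y - x) < delta -> M * (y - x) ^ 2 <= f y - f x - v * (y - x).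
Proof.
  intros [M [d [Hd H]]]. exists M, d. split; auto. intros y Hy.
  specialize (H y Hy). rewrite pow2_abs in H.
  assert (0 < (y - x) ^ 2). { rewrite <- pow2_abs. apply pow_lt. lra. }
  apply Rge_le in H. apply Rmult_le_compat_r with (r := (y - x) ^ 2) in H; [|lra].
  unfold Rdiv in H. rewrite Rmult_assoc, Rinv_l in H by lra. lra.
Qed.

Section D.
Variable b : R.
Hypothesis Hcv : Un_cv beta b.

Lemma prox_graph x v : prox_subdiff (fex b) x v -> v * (x - v) >= 0.
Proof.
  intro H. destruct (prox_ineq _ _ _ H) as [M [d [Hd HM]]].
  assert (Up : forall e, 0 < e < d -> M * e <= sl (x + e) - v).
  { intros e He. specialize (HM (x + e)). replace (x + e - x) with e in HM by ring.
    rewrite Rabs_right in HM by lra. specialize (HM ltac:(lra)).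
    pose proof (subgrad b Hcv (x + e) x).
    apply Rmult_le_reg_r with e. lra. nra. }
  assert (Lo : forall e, 0 < e < d -> M * e <= v - sl (x - e)).
  { intros e He. specialize (HM (x - e)). replace (x - e - x) with (- e) in HM by ring.
    rewrite Rabs_Ropp, Rabs_right in HM by lra. specialize (HM ltac:(lra)).
    pose proof (subgrad b Hcv (x - e) x).
    apply Rmult_le_reg_r with e. lra. nra. }
  destruct (Rtotal_order x 0) as [Hx|[Hx|Hx]].
  - assert (x <= v).
    { apply (lim_lemma x v (1 - M) d Hd). intros e He. specialize (Lo e He).
      pose proof (sl_neg (x - e) ltac:(lra)). lra. }
    assert (v <= 0).
    { apply (lim_lemma v 0 (- M) (Rmin d (-x))). apply Rmin_glb_lt; lra.
      intros e He. assert (e < d) by (pose proof (Rmin_l d (-x)); lra).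
      assert (e < -x) by (pose proof (Rmin_r d (-x)); lra).
      specialize (Up e ltac:(lra)). pose proof (sl_neg (x + e) ltac:(lra)). lra. }
    nra.
  - subst. assert (v <= 0).
    { apply (lim_lemma v 0 (1 - M) d Hd). intros e He. specialize (Up e He).
      pose proof (sl_pos (0 + e) ltac:(lra)). lra. }
    assert (0 <= v).
    { apply (lim_lemma 0 v (1 - M) d Hd). intros e He. specialize (Lo e He).
      pose proof (sl_neg (0 - e) ltac:(lra)). lra. }
    nra.
  - assert (v <= x).
    { apply (lim_lemma v x (1 - M) d Hd). intros e He. specialize (Up e He).
      pose proof (sl_pos (x + e) ltac:(lra)). lra. }
    assert (0 <= v).
    { apply (lim_lemma 0 v (- M) (Rmin d x)). apply Rmin_glb_lt; lra.
      intros e He. assert (e < d) by (pose proof (Rmin_l d x); lra).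
      assert (e < x) by (pose proof (Rmin_r d x); lra).
      specialize (Lo e ltac:(lra)). pose proof (sl_pos (x - e) ltac:(lra)). lra. }
    nra.
Qed.

End D.

Lemma cv_nonneg u l : Un_cv u l -> (forall n, 0 <= u n) -> 0 <= l.
Proof.
  intros H Hn. apply (Rle_cv_lim (Un := fun _ => 0) (Vn := u)); auto. apply cv_const.
Qed.

Lemma S_iff a c : c * (a - c) >= 0 <-> ((0 <= c /\ c <= a) \/ (0 >= c /\ c >= a)).
Proof.
  split.
  - intro H. destruct (Rle_dec 0 c).
    + destruct (Req_dec c 0). subst. destruct (Rle_dec 0 a); [left|right]; lra.
      left. split. lra. destruct (Rle_dec c a); auto.
      assert (0 < c * (c - a)) by (apply Rmult_lt_0_compat; lra). lra.
    + right. split. lra. destruct (Rle_dec a c); try lra.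
      assert (0 < (-c) * (a - c)) by (apply Rmult_lt_0_compat; lra). lra.
  - intros [[H1 H2]|[H1 H2]]; nra.
Qed.

Lemma tc_sub (F : R -> R -> Prop) w z :
  (forall x v, F x v -> v * (x - v) >= 0) ->
  tangent_cone (gph F) (0, 0) (w, z) -> z * (w - z) >= 0.
Proof.
  intros HF [t [vk [Ht [Ht0 [H1 [H2 H3]]]]]]. simpl in *.
  assert (Hk : forall k, 0 <= snd (vk k) * (fst (vk k) - snd (vk k))).
  { intro k. specialize (H3 k). unfold gph in H3. simpl in H3. apply HF in H3.
    specialize (Ht k). 
    assert (E : (0 + t k * snd (vk k)) * (0 + t k * fst (vk k) - (0 + t k * snd (vk k)))
       = (t k * t k) * (snd (vk k) * (fst (vk k) - snd (vk k)))) by ring.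
    rewrite E in H3. assert (0 < t k * t k) by nra.
    destruct (Rle_dec 0 (snd (vk k) * (fst (vk k) - snd (vk k)))); auto. nra. }
  apply Rle_ge. apply (cv_nonneg _ _ (CV_mult _ _ _ _ H2 (CV_minus _ _ _ _ H1 H2)) Hk).
Qed.

Lemma tc_mono (F G : R -> R -> Prop) u p : (forall x v, F x v -> G x v) ->
  tangent_cone (gph F) u p -> tangent_cone (gph G) u p.
Proof.
  intros H [t [vk [A [B [C [D E]]]]]]. exists t, vk. repeat split; auto.
  intro k. apply H. apply E.
Qed.

Lemma conv_prox f x v : conv_subdiff f x v -> prox_subdiff f x v.
Proof.
  intro H. exists 0, 1. split. lra. intros y Hy. specialize (H y).
  unfold Rdiv. apply Rle_ge. apply Rmult_le_pos. lra.
  apply Rlt_le, Rinv_0_lt_compat, pow_lt. lra.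
Qed.

Lemma cv_bound u l : (forall n, Rabs (u n - l) <= / (INR n + 1)) -> Un_cv u l.
Proof.
  intros H e He. destruct (INR_unbounded (/ e)) as [N HN]. exists N. intros n Hn.
  unfold R_dist. eapply Rle_lt_trans. apply H.
  apply le_INR in Hn. assert (0 < / e) by (apply Rinv_0_lt_compat; lra).
  rewrite <- (Rinv_inv e). apply Rinv_lt_contravar. nra. lra.
Qed.

Lemma alphaS_cv : Un_cv (fun k => alpha (S k)) 0.
Proof.
  apply cv_bound. intro n. rewrite Rminus_0_r. pose proof (alpha_pos (S n)).
  rewrite Rabs_right by lra. pose proof (alpha_bound (S n)). rewrite S_INR in H0.
  pose proof (pos_INR n).
  eapply Rle_trans. apply H0. apply Rinv_le_contravar; lra.
Qed.

Section E.
Variable b : R.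
Hypothesis Hcv : Un_cv beta b.

Lemma CS n v : alpha (S (S n)) <= v <= alpha (S n) -> conv_subdiff (fex b) (alpha (S n)) v.
Proof.
  intros Hv y. set (x := alpha (S n)).
  assert (Hx0 : 0 < x) by apply alpha_pos. assert (Hx1 : x <= 1) by apply alpha_le1.
  assert (Hfx : fex b x = L n x).
  { unfold fex. rewrite Rabs_right by lra. rewrite fnn_mid by lra.
    pose proof (piece_spec x (conj Hx0 Hx1)) as Hs.
    apply piece_unique in Hs. rewrite Hs. pose proof (L_diff n x). unfold x in *. nra. }
  assert (HfxS : fex b x = L (S n) x).
  { rewrite Hfx. pose proof (L_diff n x). unfold x in *. nra. }
  unfold fex at 2. set (u := Rabs y).
  assert (Hu : 0 <= u) by apply Rabs_pos. assert (Hyu : y <= u) by apply Rle_abs.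
  pose proof (G1 b Hcv u n Hu). pose proof (G1 b Hcv u (S n) Hu).
  assert (v * (y - x) <= v * (u - x)). { apply Rmult_le_compat_l. pose proof (alpha_pos (S (S n))). lra. lra. }
  destruct (Rle_dec u x).
  - rewrite HfxS. assert ((v - alpha (S (S n))) * (x - u) >= 0) by (apply Rle_ge, Rmult_le_pos; lra).
    unfold L in *. nra.
  - rewrite Hfx. assert ((alpha (S n) - v) * (u - x) >= 0) by (apply Rle_ge, Rmult_le_pos; unfold x in *; lra).
    unfold L in *. unfold x in *. nra.
Qed.

Lemma conv_neg x v : conv_subdiff (fex b) x v -> conv_subdiff (fex b) (-x) (-v).
Proof.
  intros H y. specialize (H (-y)). unfold fex in *. rewrite Rabs_Ropp in *. lra.
Qed.

Lemma conv_00 : conv_subdiff (fex b) 0 0.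
Proof. intro y. pose proof (fex_min b Hcv y). lra. Qed.

Lemma TC0 : tangent_cone (gph (conv_subdiff (fex b))) (0, 0) (0, 0).
Proof.
  exists (fun k => alpha (S k)), (fun _ => (0, 0)). simpl. split; [|split; [|split; [|split]]].
  - intro; apply alpha_pos.
  - apply alphaS_cv.
  - apply cv_const.
  - apply cv_const.
  - intro k. unfold gph. simpl. rewrite Rmult_0_r, Rplus_0_l. apply conv_00.
Qed.

Lemma TCw w z : w <> 0 -> 0 <= z / w <= 1 ->
  tangent_cone (gph (conv_subdiff (fex b))) (0, 0) (w, z).
Proof.
  intros Hw Hr.
  set (m := fun k => Rmax (z / w) (/ (INR k + 3))).
  assert (Hm : forall k, / (INR k + 3) <= m k <= 1).
  { intro k. unfold m. split. apply Rmax_r. apply Rmax_lub. lra.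
    pose proof (pos_INR k). rewrite <- Rinv_1. apply Rinv_le_contravar; lra. }
  assert (Hmc : Un_cv m (z / w)).
  { apply cv_bound. intro k. unfold m. pose proof (pos_INR k).
    assert (/ (INR k + 3) <= / (INR k + 1)) by (apply Rinv_le_contravar; lra).
    assert (0 < / (INR k + 3)) by (apply Rinv_0_lt_compat; lra).
    unfold Rmax. destruct (Rle_dec (z / w) (/ (INR k + 3))).
    - rewrite Rabs_right; lra.
    - rewrite Rminus_diag, Rabs_R0. lra. }
  assert (Hpt : forall k, conv_subdiff (fex b) (alpha (S k)) (alpha (S k) * m k)).
  { intro k. apply CS. rewrite (alpha_S (S k)). rewrite S_INR.
    pose proof (alpha_pos (S k)). specialize (Hm k).
    replace (INR k + 1 + 2) with (INR k + 3) by ring. split.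
    - unfold Rdiv. apply Rmult_le_compat_l; lra.
    - nra. }
  exists (fun k => alpha (S k) * / Rabs w), (fun k => (w, w * m k)). simpl. split; [|split; [|split; [|split]]].
  - intro k. apply Rmult_lt_0_compat. apply alpha_pos. apply Rinv_0_lt_compat, Rabs_pos_lt; auto.
  - replace 0 with (0 * / Rabs w) by ring. apply CV_mult. apply alphaS_cv. apply cv_const.
  - apply cv_const.
  - replace z with (w * (z / w)) by (field; auto). apply CV_mult. apply cv_const. auto.
  - intro k. unfold gph. simpl. destruct (Rle_dec 0 w).
    + rewrite Rabs_right by lra.
      replace (0 + alpha (S k) * / w * w) with (alpha (S k)) by (field; lra).
      replace (0 + alpha (S k) * / w * (w * m k)) with (alpha (S k) * m k) by (field; lra).
      apply Hpt.
    + rewrite Rabs_left by lra.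
      replace (0 + alpha (S k) * / - w * w) with (- alpha (S k)) by (field; lra).
      replace (0 + alpha (S k) * / - w * (w * m k)) with (- (alpha (S k) * m k)) by (field; lra).
      apply conv_neg, Hpt.
Qed.

End E.

Theorem mainTheorem3 :
  (exists b, Un_cv beta b) /\
  forall b, Un_cv beta b ->
    let f := fex b in
    continuity f /\
    convex_fun f /\
    (forall x, f 0 <= f x) /\
    (forall w z, tangent_cone (gph (prox_subdiff f)) (0, 0) (w, z) <->
                 ((0 <= z /\ z <= w) \/ (0 >= z /\ z >= w))) /\
    (forall w, (exists z, graph_deriv (prox_subdiff f) 0 0 w z) -> Rabs w = 1 ->
               exists z, graph_deriv (prox_subdiff f) 0 0 w z /\ z * w >= 1) /\
    (exists w z, w <> 0 /\ graph_deriv (conv_subdiff f) 0 0 w z /\ z * w = 0) /\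
    ~ strong_local_min f 0.
Proof.
  split. apply beta_conv.
  intros b Hb f. subst f.
  assert (TCI : forall w z, tangent_cone (gph (prox_subdiff (fex b))) (0, 0) (w, z) <->
                 ((0 <= z /\ z <= w) \/ (0 >= z /\ z >= w))).
  { intros w z. split.
    - intro H. apply S_iff. apply (tc_sub _ w z (prox_graph b Hb)); auto.
    - intro H. apply tc_mono with (conv_subdiff (fex b)). apply conv_prox.
      destruct (Req_dec w 0).
      + subst. assert (z = 0) by lra. subst. apply TC0; auto.
      + apply TCw; auto.
        assert (Hi : w * / w = 1) by (field; auto).
        unfold Rdiv. destruct (Rle_dec 0 w).
        * assert (0 < / w) by (apply Rinv_0_lt_compat; lra). split; nra.
        * assert (/ w < 0) by (apply Rinv_lt_0_compat; lra). split; nra. }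
  split. apply fex_cont; auto.
  split. apply fex_convex; auto.
  split. apply fex_min; auto.
  split. exact TCI.
  split.
  { intros w _ Hw. exists w. unfold graph_deriv. split.
    - apply TCI. destruct (Rle_dec 0 w); [left|right]; lra.
    - destruct (Rle_dec 0 w).
      + rewrite Rabs_right in Hw by lra. subst. lra.
      + rewrite Rabs_left in Hw by lra. assert (w = -1) by lra. subst. lra. }
  split.
  { exists 1, 0. split. lra. split.
    - unfold graph_deriv. apply TCw; auto; unfold Rdiv; rewrite Rmult_0_l; lra.
    - ring. }
  intros [k [g [Hk [Hg H]]]].
  destruct (INR_unbounded (Rmax (2 / k) (/ g))) as [n Hn].
  pose proof (Rmax_l (2 / k) (/ g)). pose proof (Rmax_r (2 / k) (/ g)).
  pose proof (pos_INR n).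
  set (a := alpha n).
  assert (Ha0 : 0 < a) by apply alpha_pos.
  assert (Hag : a <= g).
  { pose proof (alpha_bound n). unfold a.
    assert (/ (INR n + 1) <= g).
    { rewrite <- (Rinv_inv g). apply Rinv_le_contravar.
      apply Rinv_0_lt_compat; lra. lra. }
    lra. }
  specialize (H a). rewrite Rminus_0_r, Rabs_right in H by lra. specialize (H Hag).
  rewrite fex_0 in H.
  assert (Hfa : fex b a = L n a).
  { unfold fex. rewrite Rabs_right by lra. rewrite fnn_mid.
    2: { split; auto. apply alpha_le1. }
    pose proof (piece_spec a (conj Ha0 (alpha_le1 n))) as Hs.
    apply piece_unique in Hs. rewrite Hs. reflexivity. }
  rewrite Hfa in H. unfold L in H. pose proof (Hb' b Hb (S n)).
  rewrite alpha_S in H. fold a in H.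
  assert (Hkn : k * INR n > 2).
  { assert (Hn2 : INR n > 2 / k) by lra. apply Rmult_gt_compat_l with (r := k) in Hn2; [|lra].
    unfold Rdiv in Hn2. rewrite <- Rmult_assoc, (Rmult_comm k 2), Rmult_assoc, Rinv_r in Hn2; lra. }
  assert (HN : 0 < INR n + 2) by lra.
  assert (E : a / (INR n + 2) * a = a * a / (INR n + 2)) by (field; lra).
  rewrite E in H.
  assert (k / 2 * a ^ 2 * (INR n + 2) <= a * a).
  { apply Rge_le in H.
    assert (H6 : k / 2 * a ^ 2 <= a * a / (INR n + 2)) by lra.
    apply Rmult_le_compat_r with (r := INR n + 2) in H6; [|lra].
    replace (a * a / (INR n + 2) * (INR n + 2)) with (a * a) in H6 by (field; lra). lra. }
  assert (0 < a * a) by nra. nra.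
Qed.
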